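(* Fix $\nu$. Assume (R) and the growth-of-sum-moment condition (M), and that $T\ge p$ and $p=o(T)$ if $0\le\eta\le1/2$, respectively $p^{2\eta}=o(T)$ if $\eta>1/2$. Then \[ \widehat{MSPE}_T=\frac1T\sum_{t=1}^T|\mathbf x_t^\top\widehat{\boldsymbol\beta}_{T\nu}-\mathbf x_t^\top\boldsymbol\beta_\nu|^2=O_{\mathbb P}\Big(\frac pT\Big). \]
   Context: Setting: $p=p_T$ may grow with $T$; limits as $T,p\to\infty$. Regressors $\mathbf x_t\in\mathbb R^p$, responses with $Y_t^{(\nu)}=\mathbf x_t^\top\boldsymbol\beta_\nu+\epsilon_t^{(\nu)}$, $t=1,\dots,T$. $\mathbb P,\mathbb E$ conditional on the regressors. $\mathbb X_T=(\mathbf x_1,\dots,\mathbf x_T)^\top$ full rank, $\mathbf Y_T^{(\nu)}=(Y_1^{(\nu)},\dots,Y_T^{(\nu)})^\top$, $\widehat{\boldsymbol\beta}_{T\nu}=(\mathbb X_T^\top\mathbb X_T)^{-1}\mathbb X_T^\top\mathbf Y_T^{(\nu)}$. (R): regressors bounded; there exist positive definite $\Sigma_{\mathbf x}$, $\eta\ge0$, $C<\infty$ and a compact interval $A\subset(0,\infty)$, independent of $T,p$, with $\|T^{-1}\sum_t\mathbf x_t\mathbf x_t^\top-\Sigma_{\mathbf x}\|_2\le Cp^\eta/\sqrt T$ and $\operatorname{spec}(T^{-1}\mathbb X_T^\top\mathbb X_T)\subset A$. (M): there are $C_\nu<\infty$, $\gamma'\ge2$ with $\sup_{j\ge1}\mathbb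 E|\sum_{t=1}^Nx_{tj}\epsilon_t^{(\nu)}|^\gamma\le C_\nu N^{\gamma/2}$ for all $2\le\gamma\le\gamma'$, $N\in\mathbb N$. *)

(* Defs.v *)
From HB Require Import structures.
From mathcomp Require Import all_boot all_order all_algebra.
From mathcomp Require Import all_classical all_reals all_analysis.
Set Implicit Arguments. Unset Strict Implicit. Unset Printing Implicit Defensive.
Import Order.TTheory GRing.Theory Num.Theory.
Local Open Scope ring_scope.
Local Open Scope classical_set_scope.

Definition euclid_norm (R : realType) (n : nat) (v : 'cV[R]_n) : R :=
  Num.sqrt (\sum_(i < n) v i 0 ^+ 2).

Definition opnorm2 (R : realType) (m n : nat) (A : 'M[R]_(m, n)) : R :=
  sup [set euclid_norm (A *m v) | v in [set v : 'cV[R]_n | euclid_norm v <= 1]].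

Definition posdef (R : realType) (n : nat) (S : 'M[R]_n) : Prop :=
  S^T = S /\ forall v : 'cV[R]_n, v != 0 -> 0 < (v^T *m S *m v) 0 0.

(* Design matrix X_T = (x_1,...,x_T)^T with x_t = (x_{t1},...,x_{tp})
   (0-based indices). *)
Definition design (R : realType) (x : nat -> nat -> R) (T p : nat) : 'M[R]_(T, p) :=
  \matrix_(t < T, j < p) x t j.

Definition lead_block (R : realType) (S : nat -> nat -> R) (p : nat) : 'M[R]_p :=
  \matrix_(i < p, j < p) S i j.

Definition err_vec (R : realType) (O : Type) (eps : nat -> O -> R) (T : nat) (w : O)
  : 'cV[R]_T := \col_(t < T) eps t w.

Definition ols (R : realType) (T p : nat) (X : 'M[R]_(T, p)) (Y : 'cV[R]_T) : 'cV[R]_p :=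
  invmx (X^T *m X) *m X^T *m Y.

Definition mspe (R : realType) (O : Type) (x : nat -> nat -> R) (p : nat -> nat)
  (beta : forall T : nat, 'cV[R]_(p T)) (eps : nat -> O -> R) (T : nat) (w : O) : R :=
  let X := design x T (p T) in
  let bhat := ols X (X *m beta T + err_vec eps T w) in
  (T%:R)^-1 * \sum_(t < T) ((X *m bhat) t 0 - (X *m beta T) t 0) ^+ 2.

Definition OP_bound d (O : measurableType d) (R : realType) (P : probability O R)
  (Z : nat -> O -> R) (r : nat -> R) : Prop :=
  forall e : R, 0 < e -> exists M : R, 0 < M /\
    exists N : nat, forall n, (N <= n)%N ->
      (P [set w | (M * r n < `|Z n w|)%R] <= e%:E)%E.

(* Main.v *)
Require Import Defs.
From HB Require Import structures.
From mathcomp Require Import all_boot all_order all_algebra.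
From mathcomp Require Import all_classical all_reals all_analysis.
From mathcomp Require Import measurable_realfun.
From mathcomp Require Import ring lra.
Import Order.TTheory GRing.Theory Num.Theory.
Local Open Scope ring_scope.
Local Open Scope classical_set_scope.
Set Implicit Arguments. Unset Strict Implicit. Unset Printing Implicit Defensive.

Definition qf {R : realType} n (M : 'M[R]_n) (u v : 'cV[R]_n) : R := (u^T *m M *m v) 0 0.

Lemma qfE {R : realType} n (M : 'M[R]_n) u v :
  qf M u v = \sum_i \sum_j u i 0 * M i j * v j 0.
Proof.
rewrite /qf mxE exchange_big /=; apply: eq_bigr => j _.
rewrite mxE mulr_suml; apply: eq_bigr => i _; by rewrite mxE.
Qed.

Lemma qf1E {R : realType} n (u v : 'cV[R]_n) : qf 1%:M u v = \sum_i u i 0 * v i 0.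
Proof.
rewrite /qf mulmx1 mxE; apply: eq_bigr => i _; by rewrite mxE.
Qed.

Lemma qf1_ge0 {R : realType} n (v : 'cV[R]_n) : 0 <= qf 1%:M v v.
Proof. rewrite qf1E; apply: sumr_ge0 => i _; rewrite -expr2; exact: sqr_ge0. Qed.

Lemma qf_sym {R : realType} n (M : 'M[R]_n) u v : M^T = M -> qf M u v = qf M v u.
Proof.
move=> sM; have h : forall A : 'M[R]_1, A 0 0 = A^T 0 0 by move=> A; rewrite mxE.
by rewrite /qf h !trmx_mul trmxK sM mulmxA.
Qed.

Lemma qfDl {R : realType} n (M : 'M[R]_n) u1 u2 v : qf M (u1 + u2) v = qf M u1 v + qf M u2 v.
Proof. by rewrite /qf linearD /= !mulmxDl mxE. Qed.

Lemma qfZl {R : realType} n (M : 'M[R]_n) s u v : qf M (s *: u) v = s * qf M u v.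
Proof. by rewrite /qf linearZ /= -!scalemxAl mxE. Qed.

Lemma qfDr {R : realType} n (M : 'M[R]_n) u v1 v2 : qf M u (v1 + v2) = qf M u v1 + qf M u v2.
Proof. by rewrite /qf !mulmxDr mxE. Qed.

Lemma qfZr {R : realType} n (M : 'M[R]_n) s u v : qf M u (s *: v) = s * qf M u v.
Proof. by rewrite /qf -!scalemxAr mxE. Qed.

Lemma qfBM {R : realType} n (A : 'M[R]_n) c u v : qf (A - c%:M) u v = qf A u v - c * qf 1%:M u v.
Proof.
rewrite /qf mulmxBr mulmxBl mul_mx_scalar -scalemxAl mulmx1 mxE.
by rewrite !mxE.
Qed.

Lemma quad_disc {R : realType} (al be ga : R) : 0 <= ga ->
  (forall s, 0 <= al + 2 * be * s + ga * s ^+ 2) -> be ^+ 2 <= al * ga.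
Proof.
move=> ga0 H.
have [gp|] := ltrP 0 ga.
  have := H (- be / ga).
  have -> : al + 2 * be * (- be / ga) + ga * (- be / ga) ^+ 2 = al - be ^+ 2 / ga.
    by field; rewrite gt_eqF.
  rewrite subr_ge0 ler_pdivrMr // => h; by rewrite mulrC.
move=> g0; have g00 : ga = 0 by apply/eqP; rewrite eq_le g0 ga0.
subst ga.
have [b0|bn0] := eqVneq be 0; first by rewrite b0 expr0n /= mulr0.
have := H (- (`|al| + 1) / (2 * be)).
have -> : al + 2 * be * (- (`|al| + 1) / (2 * be)) + 0 * (- (`|al| + 1) / (2 * be)) ^+ 2
   = al - (`|al| + 1).
  by field.
have := ler_norm al; lra.
Qed.

Lemma cs {R : realType} n (M : 'M[R]_n) u v : M^T = M -> (forall w, 0 <= qf M w w) ->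
  qf M u v ^+ 2 <= qf M u u * qf M v v.
Proof.
move=> sM psd; apply: quad_disc; first exact: psd.
move=> s; have := psd (u + s *: v).
rewrite qfDl !qfDr !qfZl !qfZr (qf_sym v u sM).
have -> : qf M u u + s * qf M u v + (s * qf M u v + s * (s * qf M v v)) =
  qf M u u + 2 * qf M u v * s + qf M v v * s ^+ 2 by ring.
by [].
Qed.


Lemma sq_le_qf1 {R : realType} n (v : 'cV[R]_n) k : v k 0 ^+ 2 <= qf 1%:M v v.
Proof.
rewrite qf1E (bigD1 k) //= -expr2 lerDl; apply: sumr_ge0 => i _.
rewrite -expr2; exact: sqr_ge0.
Qed.

Lemma prod_le {R : realType} n (v : 'cV[R]_n) i j : `|v i 0 * v j 0| <= qf 1%:M v v.
Proof.
have h1 := sq_le_qf1 v i; have h2 := sq_le_qf1 v j.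
rewrite -(real_normK (num_real (v i 0))) in h1.
rewrite -(real_normK (num_real (v j 0))) in h2.
rewrite normrM.
have := sqr_ge0 (`|v i 0| - `|v j 0|).
nra.
Qed.

Lemma qf_abs_bound {R : realType} n (M : 'M[R]_n) v :
  `|qf M v v| <= (\sum_i \sum_j `|M i j|) * qf 1%:M v v.
Proof.
rewrite qfE mulr_suml; apply: le_trans (ler_norm_sum _ _ _) _.
apply: ler_sum => i _; rewrite mulr_suml.
apply: le_trans (ler_norm_sum _ _ _) _.
apply: ler_sum => j _.
have -> : v i 0 * M i j * v j 0 = M i j * (v i 0 * v j 0) by ring.
rewrite normrM; apply: ler_wpM2l => //; exact: prod_le.
Qed.

Lemma eig_lb {R : realType} n (A : 'M[R]_n) a : A^T = A -> (forall v, 0 <= qf A v v) ->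
  (forall l, eigenvalue A l -> a <= l) -> forall v, a * qf 1%:M v v <= qf A v v.
Proof.
case: n A => [|k] A sA psd eig v.
  by rewrite !qfE !big_ord0 mulr0.
pose S := [set c : R | forall w : 'cV[R]_k.+1, c * qf 1%:M w w <= qf A w w]%classic.
have S0 : S 0 by move=> w; rewrite mul0r.
pose e0 : 'cV[R]_k.+1 := \col_i (i == ord0)%:R.
have ub : forall c, S c -> c <= A ord0 ord0.
  move=> c /(_ e0).
  have -> : qf 1%:M e0 e0 = 1.
    rewrite qf1E (bigD1 ord0) //= big1 ?addr0; first by rewrite !mxE eqxx mulr1.
    by move=> i /negbTE hi; rewrite !mxE hi mul0r.
  have -> : qf A e0 e0 = A ord0 ord0.
    rewrite qfE (bigD1 ord0) //= [X in _ + X]big1 ?addr0.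
      rewrite (bigD1 ord0) //= [X in _ + X]big1 ?addr0; first by rewrite !mxE eqxx mulr1 mul1r.
      by move=> i /negbTE hi; rewrite !mxE hi mulr0.
    by move=> i /negbTE hi; apply: big1 => j _; rewrite !mxE hi !mul0r.
  by rewrite mulr1.
have hs : has_sup S by split; [exists 0 | exists (A ord0 ord0) => c Sc; exact: ub].
set l := sup S.
have Sl : S l.
  move=> w; have q0 := qf1_ge0 w.
  case: (ltrP 0 (qf 1%:M w w)) => [qp|qle].
    rewrite -ler_pdivlMr //; apply: ge_sup; first by exists 0.
    by move=> c Sc; rewrite ler_pdivlMr //; exact: Sc w.
  have -> : qf 1%:M w w = 0 by apply/eqP; rewrite eq_le qle q0.
  by rewrite mulr0; exact: psd.
have [Bu|Bnu] := boolP ((A - l%:M) \in unitmx).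
  exfalso.
  set B := A - l%:M.
  set Bi := invmx B.
  have sB : B^T = B by rewrite /B linearB /= tr_scalar_mx sA.
  have psdB : forall w, 0 <= qf B w w by move=> w; rewrite qfBM subr_ge0; exact: Sl.
  have sBi : Bi^T = Bi by rewrite /Bi trmx_inv sB.
  pose K := \sum_i \sum_j `|Bi i j| + 1.
  have Ks : 0 <= \sum_i \sum_j `|Bi i j|.
    by apply: sumr_ge0 => i _; apply: sumr_ge0 => j _.
  have K0 : 0 < K by rewrite /K; lra.
  have SK : S (l + K^-1).
    move=> w; have q0 := qf1_ge0 w.
    set u := Bi *m w.
    have e1 : qf 1%:M w w = qf B w u by rewrite /qf mulmx1 -mulmxA /u mulKVmx.
    have e2 : qf B u u = qf Bi w w.
      by rewrite /qf -mulmxA /u mulKVmx // trmx_mul sBi.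
    have cs1 := cs w u sB psdB; rewrite -e1 e2 in cs1.
    have bd : qf Bi w w <= K * qf 1%:M w w.
      apply: le_trans (ler_norm _) _; apply: le_trans (qf_abs_bound _ _) _.
      by apply: ler_wpM2r => //; rewrite /K lerDl.
    have hB : qf B w w = qf A w w - l * qf 1%:M w w by rewrite qfBM.
    have h3 : qf 1%:M w w ^+ 2 <= qf B w w * (K * qf 1%:M w w).
      exact: le_trans cs1 (ler_wpM2l (psdB w) bd).
    case: (ltrP 0 (qf 1%:M w w)) => [qp|qle].
      have h4 : qf 1%:M w w <= qf B w w * K.
        by rewrite -(ler_pM2r qp) -mulrA -expr2.
      have Ki : K * K^-1 = 1 by rewrite mulfV // gt_eqF.
      have Kip : 0 < K^-1 by rewrite invr_gt0.
      have Bp := psdB w.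
      nra.
    have -> : qf 1%:M w w = 0 by apply/eqP; rewrite eq_le qle q0.
    by rewrite mulr0; exact: psd.
  have := sup_upper_bound hs SK; rewrite -/l.
  have : 0 < K^-1 by rewrite invr_gt0.
  lra.
have el : eigenvalue A l by rewrite /eigenvalue /eigenspace kermx_eq0 row_free_unit.
apply: le_trans (Sl v).
by apply: ler_wpM2r; [exact: qf1_ge0 | exact: eig].
Qed.


Lemma qfZM {R : realType} n (M : 'M[R]_n) c u v : qf (c *: M) u v = c * qf M u v.
Proof. by rewrite /qf -scalemxAr -scalemxAl mxE. Qed.

Lemma qfG {R : realType} m n (X : 'M[R]_(m, n)) u v : qf (X^T *m X) u v = qf 1%:M (X *m u) (X *m v).
Proof. by rewrite /qf mulmx1 trmx_mul !mulmxA. Qed.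

Lemma G_unit {R : realType} (x : nat -> nat -> R) T n a : (0 < T)%N -> 0 < a ->
  (forall l, eigenvalue (T%:R^-1 *: ((design x T n)^T *m design x T n)) l -> a <= l) ->
  ((design x T n)^T *m design x T n) \in unitmx.
Proof.
move=> T0 a0 eig; apply: contraT => hn.
have : eigenvalue (T%:R^-1 *: ((design x T n)^T *m design x T n)) 0.
  rewrite /eigenvalue /eigenspace.
  set S := (_ - _)%R.
  have -> : S = T%:R^-1 *: ((design x T n)^T *m design x T n).
    by apply/matrixP => i j; rewrite /S !mxE mul0rn subr0.
  rewrite kermx_eq0 row_free_unit unitmxZ //.
  by rewrite unitfE invr_eq0 pnatr_eq0 -lt0n.
by move/eig; lra.
Qed.

Lemma diff_eq {R : realType} (x : nat -> nat -> R) T n (beta : 'cV[R]_n) (e : 'cV[R]_T) :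
  let X := design x T n in
  X^T *m X \in unitmx ->
  X *m ols X (X *m beta + e) - X *m beta = X *m (invmx (X^T *m X) *m (X^T *m e)).
Proof.
move=> X Gu; rewrite /ols.
have -> : invmx (X^T *m X) *m X^T *m (X *m beta + e) = beta + invmx (X^T *m X) *m (X^T *m e).
  rewrite -mulmxA mulmxDr [X^T *m (X *m beta)]mulmxA mulmxDr.
  by rewrite mulKmx // mulmxA.
by rewrite mulmxDr addrC addKr.
Qed.

Lemma mspe_bound {R : realType} (x : nat -> nat -> R) T n (beta : 'cV[R]_n) (e : 'cV[R]_T) a :
  (0 < T)%N -> 0 < a ->
  (forall l, eigenvalue (T%:R^-1 *: ((design x T n)^T *m design x T n)) l -> a <= l) ->
  let X := design x T n in
  let bhat := ols X (X *m beta + e) in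
  T%:R^-1 * \sum_(t < T) ((X *m bhat) t 0 - (X *m beta) t 0) ^+ 2
   <= (a * T%:R * T%:R)^-1 * \sum_(j < n) (\sum_(t < T) x t j * e t 0) ^+ 2.
Proof.
move=> T0 a0 eig /=.
set X := design x T n.
set bhat := ols X _.
have Gu := G_unit T0 a0 eig; rewrite -/X in Gu.
set G := X^T *m X.
set y := X^T *m e.
set z := invmx G *m y.
have -> : \sum_(t < T) ((X *m bhat) t 0 - (X *m beta) t 0) ^+ 2 = qf G z z.
  rewrite qfG qf1E -(diff_eq beta e Gu); apply: eq_bigr => t _.
  by rewrite -expr2 !mxE.
have -> : \sum_(j < n) (\sum_(t < T) x t j * e t 0) ^+ 2 = qf 1%:M y y.
  rewrite qf1E; apply: eq_bigr => j _; rewrite -expr2; congr (_ * _);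
  by rewrite !mxE; apply: eq_bigr => t _; rewrite !mxE.
have gzy : qf G z z = qf 1%:M z y by rewrite /qf mulmx1 -mulmxA /z mulKVmx.
have sG : G^T = G by rewrite /G trmx_mul trmxK.
have Tp : 0 < T%:R :> R by rewrite ltr0n.
have Tip : 0 < T%:R^-1 :> R by rewrite invr_gt0.
have h1 : a * qf 1%:M z z <= T%:R^-1 * qf G z z.
  rewrite -[X in _ <= X]qfZM; apply: eig_lb => //.
  - by rewrite linearZ /= sG.
  - by move=> v; rewrite qfZM qfG; apply: mulr_ge0; [exact: ltW | exact: qf1_ge0].
have h2 : qf 1%:M z y ^+ 2 <= qf 1%:M z z * qf 1%:M y y.
  apply: cs; first by rewrite tr_scalar_mx.
  exact: qf1_ge0.
rewrite -gzy in h2.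
have g0 : 0 <= qf G z z by rewrite qfG; exact: qf1_ge0.
have zz0 := qf1_ge0 z.
have yy0 := qf1_ge0 y.
set g := qf G z z in h1 h2 g0 *.
set Z := qf 1%:M z z in h1 h2 zz0.
set Y := qf 1%:M y y in h2 yy0 *.
set Ti := T%:R^-1 in h1 Tip *.
have -> : (a * T%:R * T%:R)^-1 = a^-1 * Ti * Ti by rewrite !invfM.
have aip : 0 < a^-1 by rewrite invr_gt0.
have hZ : Z <= a^-1 * Ti * g.
  by rewrite -mulrA ler_pdivlMl.
have h3 : g ^+ 2 <= a^-1 * Ti * g * Y.
  apply: le_trans h2 _; exact: ler_wpM2r.
case: (ltrP 0 g) => [gp|gle].
  have h4 : g <= a^-1 * Ti * Y.
    rewrite -(ler_pM2r gp) -expr2; apply: le_trans h3 _.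
    by rewrite -!mulrA [g * Y]mulrC.
  have := ler_wpM2l (ltW Tip) h4.
  by rewrite !mulrA [Ti * a^-1]mulrC.
have -> : g = 0 by apply/eqP; rewrite eq_le gle g0.
rewrite mulr0; apply: mulr_ge0 => //; apply: mulr_ge0; [apply: mulr_ge0|]; exact: ltW.
Qed.



Theorem corollary2 (d : measure_display) (O : measurableType d) (R : realType)
  (P : probability O R)
  (x : nat -> nat -> R) (p : nat -> nat)
  (beta : forall T : nat, 'cV[R]_(p T))
  (eps : nat -> {RV P >-> R})
  (Sigma : nat -> nat -> R) (eta C a b Cnu gam' : R) :
  (* (R): bounded regressors *)
  (exists K : R, forall t j, `|x t j| <= K) ->
  (forall q, posdef (lead_block Sigma q)) ->
  0 <= eta ->
  (forall T, (0 < T)%N ->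
     opnorm2 ((T%:R)^-1 *: ((design x T (p T))^T *m design x T (p T))
              - lead_block Sigma (p T))
       <= C * (p T)%:R `^ eta / Num.sqrt T%:R) ->
  0 < a -> a <= b ->
  (forall T, (0 < T)%N -> forall l : R,
     eigenvalue ((T%:R)^-1 *: ((design x T (p T))^T *m design x T (p T))) l ->
     a <= l <= b) ->
  (* full rank design *)
  (forall T, (0 < T)%N -> \rank (design x T (p T)) = p T) ->
  (* (M) *)
  2 <= gam' ->
  (forall (j N : nat) (g : R), (0 < N)%N -> 2 <= g -> g <= gam' ->
     ('E_P[fun w => (`| \sum_(t < N) x t j * eps t w | `^ g)%R]
        <= (Cnu * N%:R `^ (g / 2))%:E)%E) ->
  (* dimension conditions *)
  (forall T, (0 < T)%N -> (p T <= T)%N) ->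
  (eta <= 1/2 -> (fun T : nat => ((p T)%:R / T%:R : R)) @ \oo --> 0%R) ->
  (1/2 < eta -> (fun T : nat => ((p T)%:R `^ (2 * eta) / T%:R : R)) @ \oo --> 0%R) ->
  OP_bound P (mspe x beta (fun t => eps t)) (fun T => (p T)%:R / T%:R).
Proof.
move=> _ _ _ _ a0 _ eigH _ gam2 Mom _ _ _ e e0.
have Cp : 0 < `|Cnu| + 1 by have := normr_ge0 Cnu; lra.
pose M := (`|Cnu| + 1) / (a * e).
have Mp : 0 < M by rewrite /M divr_gt0 // mulr_gt0.
exists M; split => //; exists 1%N => T T0.
have eig : forall l, eigenvalue (T%:R^-1 *: ((design x T (p T))^T *m design x T (p T))) l -> a <= l.
  by move=> l /(eigH T T0) /andP[].
set n := p T in eig *.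
set X := design x T n in eig *.
set Z := mspe x beta (fun t => eps t) T.
have Gu := G_unit T0 a0 eig; rewrite -/X in Gu.
set Hm := X *m (invmx (X^T *m X) *m X^T).
have Zeq : Z = fun w => T%:R^-1 * \sum_(t < T) (\sum_(s < T) Hm t s * eps s w) ^+ 2.
  apply/funext => w; rewrite /Z /mspe /=; congr (_ * _); apply: eq_bigr => t _.
  have -> : (X *m ols X (X *m beta T + err_vec (fun t => eps t) T w)) t 0 - (X *m beta T) t 0
     = (X *m ols X (X *m beta T + err_vec (fun t => eps t) T w) - X *m beta T) t 0.
    by rewrite !mxE.
  rewrite diff_eq // /Hm -/X !mulmxA [in LHS]mxE; congr (_ ^+ 2).
  by apply: eq_bigr => s _; rewrite !mxE.
have mZ : measurable_fun setT Z.
  rewrite Zeq; apply: measurable_funM => //.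
  apply: measurable_sum => t; apply: measurable_funX; apply: measurable_sum => s.
  by apply: measurable_funM => //; exact: measurable_funPT.
pose S j w := \sum_(t < T) x t j * eps t w.
pose Q w := (a * T%:R * T%:R)^-1 * \sum_(j < n) S j w ^+ 2.
have ZQ : forall w, Z w <= Q w.
  move=> w; have := mspe_bound (beta T) (err_vec (fun t => eps t) T w) T0 a0 eig.
  rewrite /= -/X /Q /S => h; apply: le_trans h _; rewrite /Z /mspe /= -/X.
  apply: ler_wpM2l; first by rewrite invr_ge0 !mulr_ge0 // ltW.
  apply: ler_sum => j _; rewrite le_eqVlt; apply/orP; left; apply/eqP.
  by congr (_ ^+ 2); apply: eq_bigr => t _; rewrite mxE.
have Z0 : forall w, 0 <= Z w.
  move=> w; rewrite Zeq; apply: mulr_ge0; first by rewrite invr_ge0.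
  by apply: sumr_ge0 => t _; exact: sqr_ge0.
have mS : forall j, measurable_fun setT (S j).
  by move=> j; apply: measurable_sum => t; apply: measurable_funM => //; exact: measurable_funPT.
have mQ : measurable_fun setT Q.
  apply: measurable_funM => //; apply: measurable_sum => j; exact: measurable_funX.
have EQ : (\int[P]_w (Q w)%:E <= ((a * T%:R * T%:R)^-1 * (n%:R * (Cnu * T%:R)))%:E)%E.
  have bd : forall j : 'I_n, (\int[P]_w (S j w ^+ 2)%:E <= (Cnu * T%:R)%:E)%E.
    move=> j; have := Mom j T 2 T0 (lexx 2) gam2.
    rewrite expectation.unlock divff // powRr1 ?ler0n //.
    rewrite (eq_integral (fun w => (S j w ^+ 2)%:E)) //.
    move=> w _; rewrite /S (@powR_mulrn _ _ 2) //.
    by rewrite real_normK // num_real.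
  have k0 : (0 <= ((a * T%:R * T%:R)^-1)%:E)%E by rewrite lee_fin invr_ge0 !mulr_ge0 // ltW.
  rewrite /Q (eq_integral (fun w => ((a * T%:R * T%:R)^-1)%:E * \sum_(j < n) (S j w ^+ 2)%:E)%E); last first.
    by move=> w _; rewrite EFinM sumEFin.
  have mS2 : forall j, measurable_fun setT (fun w => (S j w ^+ 2)%:E).
    by move=> j; apply/measurable_EFinP; exact: measurable_funX.
  have S20 : forall j w, setT w -> (0 <= (S j w ^+ 2)%:E)%E by move=> j w _; rewrite lee_fin sqr_ge0.
  rewrite ge0_integralZl //; last 2 first.
  - by apply: emeasurable_sum => j.
  - by move=> w _; apply: sume_ge0 => j _; exact: S20.
  rewrite ge0_integral_sum //; try (by move=> j w _; rewrite lee_fin sqr_ge0); try (by move=> j; exact: mS2).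
  apply: (le_trans (y := (((a * T%:R * T%:R)^-1)%:E * (n%:R * (Cnu * T%:R))%:E)%E)); last by [].
  apply: lee_wpmul2l => //.
  apply: (@le_trans _ _ (\sum_(j < n) (Cnu * T%:R)%:E)%E).
    by apply: lee_sum => j _; exact: bd.
  by rewrite sumEFin sumr_const card_ord mulr_natl.
have Tp : 0 < T%:R :> R by rewrite ltr0n.
have [n0|np] := eqVneq n 0%N.
  have Q0 : forall w, Q w = 0.
    move=> w; rewrite /Q big1 ?mulr0 //; case => j hj; exfalso; move: hj; by rewrite n0.
  rewrite (_ : [set w | M * (n%:R / T%:R) < `|Z w|] = set0) ?measure0 ?lee_fin ?ltW //.
  apply/seteqP; split => w //=.
  have -> : Z w = 0 by apply/eqP; rewrite eq_le Z0 andbT -(Q0 w) ZQ.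
  by rewrite n0 mul0r mulr0 normr0 ltxx.
have npos : 0 < n%:R :> R by rewrite ltr0n lt0n.
set c := M * (n%:R / T%:R).
have cp : 0 < c by rewrite /c mulr_gt0 // divr_gt0.
have mEZ : measurable_fun setT (EFin \o Z) by apply/measurable_EFinP.
have mEQ : measurable_fun setT (EFin \o Q) by apply/measurable_EFinP.
set A := [set w | c < `|Z w|].
have mA : measurable A.
  have -> : A = setT `&` Z @^-1` `]c, +oo[%classic.
    apply/seteqP; split => w; rewrite /A /= in_itv /= andbT ger0_norm //.
      by case.
  by apply: (mZ measurableT); exact: measurable_itv.
set B := setT `&` [set w | (c%:E <= `|(EFin \o Z) w|)%E].
have mB : measurable B.
  have -> : B = setT `&` Z @^-1` `[c, +oo[%classic.
    apply/seteqP; split => w; rewrite /B /= in_itv /= andbT lee_fin ger0_norm //.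
  by apply: (mZ measurableT); exact: measurable_itv.
have AB : (P A <= P B)%E.
  apply: le_measure; rewrite ?inE //.
  move=> w /= h; split => //; rewrite /= lee_fin; exact: ltW.
have hI := le_integral_comp_abse P measurableT (g := EFin \o Z) (a := c) (f := id)
  (@measurable_id _ _ _) (fun r (h : (0 <= r)%E) => h) (fun x _ y _ h => h) mEZ cp.
rewrite -/B /= in hI.
have h2 : (\int[P]_(w in setT) `|(Z w)%:E| <= \int[P]_w (Q w)%:E)%E.
  rewrite (eq_integral (fun w => (Z w)%:E)); last by move=> w _; rewrite abse_EFin ger0_norm.
  apply: ge0_le_integral => //.
  - by move=> w _; rewrite lee_fin.
  - by move=> w _; rewrite lee_fin.
have hB := le_trans hI (le_trans h2 EQ).
have PB0 : (0 <= P B)%E by apply: measure_ge0.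
have PB1 : (P B <= 1)%E by apply: probability_le1.
have fB : P B \is a fin_num by rewrite ge0_fin_numE // (le_lt_trans PB1) // ltry.
rewrite -(fineK fB) lee_fin in hB.
apply: le_trans AB _; rewrite -(fineK fB) lee_fin.
set pb := fine (P B) in hB *.
have Kv : (a * T%:R * T%:R)^-1 * (n%:R * (Cnu * T%:R)) = Cnu * (n%:R / (a * T%:R)).
  by field; rewrite !gt_eqF.
have ce : c * e = (`|Cnu| + 1) * (n%:R / (a * T%:R)).
  by rewrite /c /M; field; rewrite !gt_eqF.
have q0 : 0 < n%:R / (a * T%:R) by rewrite divr_gt0 // mulr_gt0.
have lt1 : Cnu * (n%:R / (a * T%:R)) < c * e.
  by rewrite ce ltr_pM2r //; have := ler_norm Cnu; lra.
rewrite Kv in hB.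
have : c * pb < c * e by apply: le_lt_trans hB lt1.
rewrite ltr_pM2l // => /ltW //.
Qed.
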